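(* For every integer $t\ge 0$, the two-dimensional continued fractions associated to the operators $$A_t=\begin{pmatrix}0&1&0\\0&0&1\\1&1+t&-t-2\end{pmatrix}\quad\text{and}\quad M_t=\begin{pmatrix}0&0&1\\1&0&-t-5\\0&1&t+6\end{pmatrix}$$ are equivalent.
   Context: Let $n\ge1$. Given $n+1$ hyperplanes through the origin of $\mathbb R^{n+1}$ in general position, their complement consists of $2^{n+1}$ open orthants. For each orthant, the sail is the boundary of the convex hull of all integer points, other than the origin, lying in the closure of that orthant; the union of all $2^{n+1}$ sails is the $n$-dimensional continued fraction associated to these hyperplanes. If $A\in GL(n+1,\mathbb Z)$ has characteristic polynomial irreducible over $\mathbb Q$ with all roots real and distinct, the $n+1$ hyperplanes spanned by the subsets of $n$ of its $n+1$ linearly independent eigenvectors are in general position, and the continued fraction they define is called the continued fraction associated to $A$. Two continued fractions are equivalent if there is a linear transformation of $\mathbb R^{n+1}$ preserving the integer lattice $\mathbb Z^{n+1}$ that maps one onto the other. (Here $n=2$; for every $t\ge0$ both matrices have characteristic polynomial irreducible over $\mathbb Q$ with three distinct real roots, so the associated continued fractions are defined.) *)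

(* Defs.v *)
From HB Require Import structures.
From mathcomp Require Import all_boot all_order all_algebra.
From mathcomp Require Import all_classical all_reals all_analysis.
Set Implicit Arguments. Unset Strict Implicit. Unset Printing Implicit Defensive.
Import Order.TTheory GRing.Theory Num.Theory.
Import numFieldNormedType.Exports.
Local Open Scope classical_set_scope.
Local Open Scope ring_scope.

Definition int_pts (R : realType) : set 'cV[R]_3 :=
  [set x | exists z : 'cV[int]_3, x = map_mx (fun a : int => a%:~R) z].

Arguments int_pts R : clear implicits.

Definition conv_hull (R : realType) (S : set 'cV[R]_3) : set 'cV[R]_3 :=
  [set x | exists (n : nat) (p : 'I_n -> 'cV[R]_3) (w : 'I_n -> R),
     (forall i, S (p i)) /\ (forall i, 0 <= w i) /\ \sum_i w i = 1 /\
     x = \sum_i w i *: p i].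

Definition bdry (R : realType) (S : set 'cV[R]_3) : set 'cV[R]_3 :=
  closure S `\` interior S.

(* v : three linearly independent vectors; the three hyperplanes are the
   spans of pairs {v j, v k}.  The closed orthant with sign pattern s
   (s i = true means "+") is the closure of the corresponding open orthant. *)
Definition closed_orthant (R : realType) (v : 'I_3 -> 'cV[R]_3)
  (s : 'I_3 -> bool) : set 'cV[R]_3 :=
  [set x | exists c : 'I_3 -> R,
     (forall i, 0 <= (if s i then c i else - c i)) /\ x = \sum_i c i *: v i].

Definition sail (R : realType) (v : 'I_3 -> 'cV[R]_3) (s : 'I_3 -> bool)
  : set 'cV[R]_3 :=
  bdry (conv_hull ((closed_orthant v s `&` int_pts R) `\` [set 0])).

Definition cont_frac (R : realType) (v : 'I_3 -> 'cV[R]_3) : set 'cV[R]_3 :=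
  [set x | exists s : 'I_3 -> bool, sail v s x].

(* v i is an eigenvector of A with eigenvalue l i, eigenvalues pairwise
   distinct (hence the v i are linearly independent) *)
Definition eigenbasis (R : realType) (A : 'M[R]_3) (v : 'I_3 -> 'cV[R]_3)
  (l : 'I_3 -> R) : Prop :=
  (forall i, v i != 0 /\ A *m v i = l i *: v i) /\ injective l.

Definition cf_equiv (R : realType) (S1 S2 : set 'cV[R]_3) : Prop :=
  exists L : 'M[R]_3,
    (fun x => L *m x) @` int_pts R = int_pts R /\ (fun x => L *m x) @` S1 = S2.

Definition mx3 (R : realType) (e : seq (seq R)) : 'M[R]_3 :=
  \matrix_(i < 3, j < 3) nth 0 (nth [::] e i) j.

Definition A_t (R : realType) (t : nat) : 'M[R]_3 :=
  mx3 [:: [:: 0; 1; 0]; [:: 0; 0; 1]; [:: 1; 1 + t%:R; - t%:R - 2]].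

Definition M_t (R : realType) (t : nat) : 'M[R]_3 :=
  mx3 [:: [:: 0; 0; 1]; [:: 1; 0; - t%:R - 5]; [:: 0; 1; t%:R + 6]].

Arguments A_t R t : clear implicits.
Arguments M_t R t : clear implicits.

(* Main.v *)
Require Import Defs.
From HB Require Import structures.
From mathcomp Require Import all_boot all_order all_algebra.
From mathcomp Require Import all_classical all_reals all_analysis.
From mathcomp Require Import ring lra.
Import Order.TTheory GRing.Theory Num.Theory.
Import numFieldNormedType.Exports.
Set Implicit Arguments. Unset Strict Implicit. Unset Printing Implicit Defensive.
Local Open Scope classical_set_scope.
Local Open Scope ring_scope.

Lemma sum_cont (R : realType) (n : nat) (F : 'I_n -> 'cV[R]_3 -> 'cV[R]_3) :
  (forall k, continuous (F k)) -> continuous (fun x => \sum_k F k x).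
Proof.
elim: n F => [|n IH] F Fc.
  have -> : (fun x : 'cV[R]_3 => \sum_(k < 0) F k x) = (fun=> 0).
    by apply/funext => x; rewrite big_ord0.
  exact: cst_continuous.
have -> : (fun x => \sum_(k < n.+1) F k x) =
   (fun x => \sum_(k < n) F (widen_ord (leqnSn n) k) x) + (fun x => F ord_max x).
  by apply/funext => x; rewrite big_ord_recr.
move=> x; apply: continuousD; last exact: Fc.
by apply: IH => k; apply: Fc.
Qed.

Lemma mulmx_cont (R : realType) (L : 'M[R]_3) :
  continuous (fun x : 'cV[R]_3 => L *m x).
Proof.
have E : (fun x : 'cV[R]_3 => L *m x) =
  (fun x => \sum_k x k 0 *: col k L).
  apply/funext => x; apply/matrixP => i j.
  rewrite !mxE summxE; apply: eq_bigr => k _.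
  by rewrite !mxE (ord1 j) mulrC.
rewrite E; apply: sum_cont => k x.
apply: continuousZr_tmp; apply: coord_continuous.
Qed.

Lemma pre_int (R : realType) (h : 'cV[R]_3 -> 'cV[R]_3) (S : set 'cV[R]_3) :
  continuous h -> h @^-1` (interior S) `<=` interior (h @^-1` S).
Proof.
move=> hc x /= Hx.
exact: hc.
Qed.

Lemma int_pre (R : realType) (f g : 'cV[R]_3 -> 'cV[R]_3) :
  continuous f -> continuous g -> cancel f g -> cancel g f ->
  forall S, interior (g @^-1` S) = g @^-1` (interior S).
Proof.
move=> fc gc fg gf S; apply/seteqP; split; last exact: pre_int.
move=> x Hx /=.
have H := @pre_int R f (g @^-1` S) fc (g x).
have E : f @^-1` (g @^-1` S) = S by apply/funext => y /=; rewrite fg.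
rewrite -E; apply: H => /=; by rewrite gf.
Qed.

Lemma closureCC (R : realType) (A : set 'cV[R]_3) :
  closure A = ~` interior (~` A).
Proof. by rewrite interiorC setCK. Qed.

Lemma bdry_pre (R : realType) (f g : 'cV[R]_3 -> 'cV[R]_3) :
  continuous f -> continuous g -> cancel f g -> cancel g f ->
  forall S, bdry (g @^-1` S) = g @^-1` (bdry S).
Proof.
move=> fc gc fg gf S; rewrite /bdry !closureCC.
have -> : ~` (g @^-1` S) = g @^-1` (~` S) by [].
by rewrite !(@int_pre R f g fc gc fg gf).
Qed.

Lemma img_pre (T : Type) (f g : T -> T) : cancel f g -> cancel g f ->
  forall X, f @` X = g @^-1` X.
Proof.
move=> fg gf X; apply/seteqP; split.
  by move=> _ [x Xx <-] /=; rewrite fg.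
by move=> y /= Xy; exists (g y) => //; rewrite gf.
Qed.

Definition lin (R : realType) (L : 'M[R]_3) : 'cV[R]_3 -> 'cV[R]_3 :=
  fun x => L *m x.

Lemma conv_pre (R : realType) (L L' : 'M[R]_3) :
  cancel (lin L) (lin L') -> cancel (lin L') (lin L) ->
  forall S, conv_hull ((lin L') @^-1` S) = (lin L') @^-1` (conv_hull S).
Proof.
move=> fg gf S; apply/seteqP; split; rewrite /lin in fg gf *.
  move=> x [n [p [w [Sp [w0 [w1 ->]]]]]] /=.
  exists n, (fun i => L' *m p i), w; split => //; split => //; split => //.
  by rewrite mulmx_sumr; apply: eq_bigr => i _; rewrite scalemxAr.
move=> x [n [p [w [Sp [w0 [w1 Ex]]]]]] /=.
exists n, (fun i => L *m p i), w; split; first by move=> i /=; rewrite fg.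
split => //; split => //.
rewrite -[x]gf Ex mulmx_sumr; apply: eq_bigr => i _; by rewrite scalemxAr.
Qed.

Lemma sign_aux (R : realType) (a c : R) (s : bool) :
  c != 0 -> 0 <= (if s then a else - a) ->
  0 <= (if (if 0 < c then s else ~~ s) then a * c else - (a * c)).
Proof.
move=> c0; have [cp|cn] := ltrP 0 c.
  by case: s => /= h; nra.
have cn' : c < 0 by rewrite lt_neqAle c0 cn.
by case: s => /= h; nra.
Qed.

Lemma sign_aux2 (R : realType) (a c : R) (s : bool) :
  c != 0 -> 0 <= (if (if 0 < c then s else ~~ s) then a * c else - (a * c)) ->
  0 <= (if s then a else - a).
Proof.
move=> c0; have [cp|cn] := ltrP 0 c.
  by case: s => /= h; nra.
have cn' : c < 0 by rewrite lt_neqAle c0 cn.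
by case: s => /= h; nra.
Qed.

Lemma orth_pre (R : realType) (L L' : 'M[R]_3) (v w : 'I_3 -> 'cV[R]_3)
  (c : 'I_3 -> R) (sg : 'I_3 -> 'I_3) (sgi : injective sg) :
  cancel (lin L) (lin L') -> cancel (lin L') (lin L) ->
  (forall i, c i != 0) -> (forall i, L *m v i = c i *: w (sg i)) ->
  forall s, exists s', (lin L') @^-1` (closed_orthant v s) = closed_orthant w s'.
Proof.
move=> fg gf c0 Lv s.
pose s' j := let i := invF sgi j in if 0 < c i then s i else ~~ s i.
exists s'; apply/seteqP; split.
  move=> y [a [Ha Ey]].
  exists (fun j => a (invF sgi j) * c (invF sgi j)); split.
    by move=> j; apply: sign_aux.
  rewrite -[y]gf Ey /lin mulmx_sumr [in RHS](reindex_inj sgi) /=.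
  apply: eq_bigr => i _; rewrite invF_f -scalemxAr Lv scalerA //.
move=> y [b [Hb Ey]].
exists (fun i => b (sg i) / c i); split.
  move=> i; apply: (@sign_aux2 _ _ (c i)) => //.
  have := Hb (sg i); rewrite /s' /= invF_f divfK //.
have -> : y = lin L (\sum_i (b (sg i) / c i) *: v i).
  rewrite /lin Ey mulmx_sumr (reindex_inj sgi) /=.
  apply: eq_bigr => i _; rewrite -scalemxAr Lv scalerA divfK //.
exact: fg.
Qed.

Lemma intpts_pre (R : realType) (Lz Lz' : 'M[int]_3) :
  let L := map_mx (fun a : int => a%:~R : R) Lz in
  let L' := map_mx (fun a : int => a%:~R : R) Lz' in
  cancel (lin L) (lin L') -> cancel (lin L') (lin L) ->
  (lin L') @^-1` (int_pts R) = int_pts R.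
Proof.
move=> L L' fg gf; apply/seteqP; split.
  move=> y [z Ez]; exists (Lz *m z).
  by rewrite map_mxM -Ez -/L; symmetry; apply: gf.
move=> y [z ->]; exists (Lz' *m z).
by rewrite /lin map_mxM.
Qed.

Lemma sail_pre (R : realType) (Lz Lz' : 'M[int]_3) (v w : 'I_3 -> 'cV[R]_3)
  (c : 'I_3 -> R) (sg : 'I_3 -> 'I_3) (sgi : injective sg) :
  let L := map_mx (fun a : int => a%:~R : R) Lz in
  let L' := map_mx (fun a : int => a%:~R : R) Lz' in
  cancel (lin L) (lin L') -> cancel (lin L') (lin L) ->
  (forall i, c i != 0) -> (forall i, L *m v i = c i *: w (sg i)) ->
  forall s, exists s', (lin L) @` (sail v s) = sail w s'.
Proof.
move=> L L' fg gf c0 Lv s.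
have [s' Es'] := orth_pre sgi fg gf c0 Lv s.
exists s'; rewrite (img_pre fg gf) /sail.
rewrite -(@bdry_pre R (lin L) (lin L')) ?mulmx_cont //.
rewrite -(conv_pre fg gf).
congr (bdry (conv_hull _)).
have -> : lin L' @^-1` ((closed_orthant v s `&` int_pts R) `\` [set 0]) =
   ((lin L' @^-1` closed_orthant v s) `&` (lin L' @^-1` int_pts R)) `\`
   (lin L' @^-1` [set 0]) by [].
rewrite Es' (@intpts_pre R Lz Lz' fg gf).
congr (_ `\` _); apply/seteqP; split => x /=.
  by move=> H; rewrite -[x]gf; rewrite /lin in H *; rewrite H mulmx0.
  by move=> ->; rewrite /lin mulmx0.
exact: mulmx_cont.
exact: mulmx_cont.
Qed.

Lemma transfer (R : realType) (Lz Lz' : 'M[int]_3) (v w : 'I_3 -> 'cV[R]_3)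
  (c : 'I_3 -> R) (sg : 'I_3 -> 'I_3) (sgi : injective sg) :
  let L := map_mx (fun a : int => a%:~R : R) Lz in
  let L' := map_mx (fun a : int => a%:~R : R) Lz' in
  cancel (lin L) (lin L') -> cancel (lin L') (lin L) ->
  (forall i, c i != 0) -> (forall i, L *m v i = c i *: w (sg i)) ->
  cf_equiv (cont_frac v) (cont_frac w).
Proof.
move=> L L' fg gf c0 Lv.
pose sg' := invF sgi.
have sgi' : injective sg' by apply: (can_inj (f_invF sgi)).
pose c' j := (c (sg' j))^-1.
have c0' : forall j, c' j != 0 by move=> j; rewrite invr_eq0.
have Lw : forall j, L' *m w j = c' j *: v (sg' j).
  move=> j; have E : w j = c' j *: (L *m v (sg' j)).
    by rewrite Lv scalerA mulVf // scale1r /sg' f_invF.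
  rewrite E -scalemxAr; congr (_ *: _); exact: fg.
exists L; split; first by rewrite (img_pre fg gf) (@intpts_pre R Lz Lz' fg gf).
apply/seteqP; split.
  move=> _ [x [s Hs] <-].
  have [s' Es'] := sail_pre sgi fg gf c0 Lv s.
  by exists s'; rewrite -Es'; exists x.
move=> y [s' Hs'].
have [s Es] := @sail_pre R Lz' Lz w v c' sg' sgi' gf fg c0' Lw s'.
exists (L' *m y); last exact: gf.
exists s; rewrite -Es; by exists y.
Qed.

Definition mx3z (e : seq (seq int)) : 'M[int]_3 :=
  \matrix_(i < 3, j < 3) nth 0 (nth [::] e i) j.
Definition Lz (t : nat) : 'M[int]_3 :=
  mx3z [:: [:: 1; t%:R + 2; - t%:R - 4]; [:: 0; - t%:R - 5; t%:R + 6]; [:: 0; 1; -1]].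
Definition Pz (t : nat) : 'M[int]_3 :=
  mx3z [:: [:: 1; 2; t%:R + 8]; [:: 0; 1; t%:R + 6]; [:: 0; 1; t%:R + 5]].

Lemma mul3 (R : comRingType) n (A : 'M[R]_3) (B : 'M[R]_(3, n)) i j :
  (A *m B) i j = A i 0 * B 0 j + A i 1 * B 1 j + A i 2%:R * B 2%:R j.
Proof.
rewrite mxE !big_ord_recr big_ord0 /= add0r.
by congr (_ * _ + _ * _ + _ * _); congr (_ _ _); apply/val_inj.
Qed.

Lemma lin_comb (R : comRingType) (a b c d e : R) :
  a = b -> c - d = e * (b - a) -> c = d.
Proof. by move=> -> h; apply/eqP; rewrite -subr_eq0 h subrr mulr0. Qed.

Definition pA (R : realType) (t : nat) (l : R) :=
  l ^+ 3 + (t%:R + 2) * l ^+ 2 - (t%:R + 1) * l - 1.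
Definition qM (R : realType) (t : nat) (k : R) :=
  k ^+ 3 - (t%:R + 6) * k ^+ 2 + (t%:R + 5) * k - 1.
Definition muf (R : realType) (t : nat) (l : R) := l ^+ 2 + (t%:R + 3) * l + 2.
Definition gM (R : realType) (t : nat) (k : R) : 'cV[R]_3 :=
  \col_i nth 0 [:: k ^+ 2 - (t%:R + 6) * k + (t%:R + 5); k - t%:R - 6; 1] i.

Lemma eigA (R : realType) t (x : 'cV[R]_3) l : A_t R t *m x = l *: x ->
  x 1 0 = l * x 0 0 /\ x 2%:R 0 = l * (l * x 0 0) /\ x 0 0 * pA t l = 0.
Proof.
move=> H; have h (k : 'I_3) := congr1 (fun m : 'cV[R]_3 => m k 0) H.
have h0 := h 0; have h1 := h 1; have h2 := h 2%:R.
rewrite /= mul3 /A_t /mx3 !mxE /= in h0.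
rewrite /= mul3 /A_t /mx3 !mxE /= in h1.
rewrite /= mul3 /A_t /mx3 !mxE /= in h2.
have e1 : x 1 0 = l * x 0 0 by apply: (lin_comb (e := -1) h0); ring.
have e2 : x 2%:R 0 = l * (l * x 0 0).
  rewrite -e1. by apply: (lin_comb (e := -1) h1); ring.
split => //; split => //.
rewrite e1 e2 in h2; apply: (lin_comb (e := 1) h2); rewrite /pA; ring.
Qed.

Lemma eigM (R : realType) t (y : 'cV[R]_3) k : M_t R t *m y = k *: y ->
  y 0 0 = (k ^+ 2 - (t%:R + 6) * k + (t%:R + 5)) * y 2%:R 0 /\
  y 1 0 = (k - t%:R - 6) * y 2%:R 0 /\ qM t k * y 2%:R 0 = 0.
Proof.
move=> H; have h (i : 'I_3) := congr1 (fun m : 'cV[R]_3 => m i 0) H.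
have h0 := h 0; have h1 := h 1; have h2 := h 2%:R.
rewrite /= mul3 /M_t /mx3 !mxE /= in h0.
rewrite /= mul3 /M_t /mx3 !mxE /= in h1.
rewrite /= mul3 /M_t /mx3 !mxE /= in h2.
have e1 : y 1 0 = (k - t%:R - 6) * y 2%:R 0.
  by apply: (lin_comb (e := -1) h2); ring.
rewrite e1 in h1.
have e0 : y 0 0 = (k ^+ 2 - (t%:R + 6) * k + (t%:R + 5)) * y 2%:R 0.
  by apply: (lin_comb (e := -1) h1); ring.
split => //; split => //.
rewrite e0 in h0; apply: (lin_comb (e := 1) h0); rewrite /qM; ring.
Qed.

Lemma Lx (R : realType) t (x : 'cV[R]_3) l : A_t R t *m x = l *: x ->
  map_mx (fun a : int => a%:~R : R) (Lz t) *m x =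
  (x 0 0 * (l * (1 - l))) *: gM t (muf t l).
Proof.
move=> H; have [e1 [e2 e3]] := eigA H.
apply/matrixP => i j; rewrite (ord1 j) mul3 !mxE /= e1 e2.
rewrite /Lz /mx3z /gM /muf ?mxE.
case: i => [[|[|[|i]]] Hi] //=.
- apply: (lin_comb (e := - (-1 + (-4 - t%:R) * l + (3 + t%:R) * l ^+ 2 + l ^+ 3)) e3).
  rewrite /pA; ring.
- apply: (lin_comb (e := - l) e3); rewrite /pA; ring.
- apply: (lin_comb (e := 0) e3); rewrite /pA; ring.
Qed.

Lemma eigM_vec (R : realType) t (y : 'cV[R]_3) k : M_t R t *m y = k *: y ->
  y = y 2%:R 0 *: gM t k.
Proof.
move=> H; have [e0 [e1 _]] := eigM H.
apply/matrixP => i j; rewrite (ord1 j) !mxE.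
case: i => [[|[|[|i]]] Hi] //=.
- have -> : Ordinal Hi = 0 by apply/val_inj.
  by rewrite e0 mulrC.
- have -> : Ordinal Hi = 1 by apply/val_inj.
  by rewrite e1 mulrC.
- have -> : Ordinal Hi = 2%:R by apply/val_inj.
  by rewrite mulr1.
Qed.

Lemma eigA_vec (R : realType) t (x : 'cV[R]_3) l : A_t R t *m x = l *: x ->
  x = x 0 0 *: \col_i nth 0 [:: 1; l; l ^+ 2] i.
Proof.
move=> H; have [e1 [e2 _]] := eigA H.
apply/matrixP => i j; rewrite (ord1 j) !mxE.
case: i => [[|[|[|i]]] Hi] //=.
- have -> : Ordinal Hi = 0 by apply/val_inj.
  by rewrite mulr1.
- have -> : Ordinal Hi = 1 by apply/val_inj.
  by rewrite e1 mulrC.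
- have -> : Ordinal Hi = 2%:R by apply/val_inj.
  rewrite e2; ring.
Qed.

Lemma qmuf (R : realType) t (l : R) : pA t l = 0 -> qM t (muf t l) = 0.
Proof.
move=> h.
have -> : qM t (muf t l) = pA t l * (7 + 2 * t%:R + (14 + 7 * t%:R + t%:R ^+ 2) * l
   + (7 + 2 * t%:R) * l ^+ 2 + l ^+ 3).
  by rewrite /qM /muf /pA; ring.
by rewrite h mul0r.
Qed.

Lemma pA_root_ne (R : realType) t (l : R) : pA t l = 0 -> l != 0 /\ 1 - l != 0.
Proof.
move=> h; split; apply/eqP => e.
- by move: h; rewrite /pA e; apply/eqP; rewrite (_ : _ - 1 = -1); [rewrite oppr_eq0 oner_eq0 | ring].
- have l1 : l = 1 by apply/eqP; rewrite -subr_eq0 -opprB e oppr0.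
  by move: h; rewrite /pA l1; apply/eqP; rewrite (_ : _ - 1 = 1); [rewrite oner_eq0 | ring].
Qed.

Lemma cubic (R : realType) t (a b c d : R) :
  qM t a = 0 -> qM t b = 0 -> qM t c = 0 -> qM t d = 0 ->
  a != b -> a != c -> b != c -> [\/ d = a, d = b | d = c].
Proof.
move=> qa qb qc qd ab ac bc.
have [->|da] := eqVneq d a; first by constructor 1.
have [->|db] := eqVneq d b; first by constructor 2.
have [->|dc] := eqVneq d c; first by constructor 3.
exfalso.
have Q (x y : R) : x != y -> qM t x = 0 -> qM t y = 0 ->
    x ^+ 2 + x * y + y ^+ 2 - (t%:R + 6) * (x + y) + (t%:R + 5) = 0.
  move=> xy qx qy.
  have E : (x - y) * (x ^+ 2 + x * y + y ^+ 2 - (t%:R + 6) * (x + y) + (t%:R + 5))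
     = qM t x - qM t y by rewrite /qM; ring.
  rewrite qx qy subrr in E; move/eqP: E; rewrite mulf_eq0 subr_eq0 (negbTE xy).
  by move/eqP.
have ha := Q _ _ da qd qa; have hb := Q _ _ db qd qb; have hc := Q _ _ dc qd qc.
have E1 : (a - b) * (a + b + d - (t%:R + 6)) = 0.
  by rewrite -[0](subrr 0) -{1}ha -hb; ring.
have E2 : (a - c) * (a + c + d - (t%:R + 6)) = 0.
  by rewrite -[0](subrr 0) -{1}ha -hc; ring.
move/eqP: E1; rewrite mulf_eq0 subr_eq0 (negbTE ab) /= => /eqP E1.
move/eqP: E2; rewrite mulf_eq0 subr_eq0 (negbTE ac) /= => /eqP E2.
by move/eqP: bc; apply; lra.
Qed.

Lemma LP t : Lz t *m Pz t = 1.
Proof.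
apply/matrixP => i j; rewrite mul3 /Lz /Pz /mx3z !mxE.
by case: i => [[|[|[|i]]] Hi] //; case: j => [[|[|[|j]]] Hj] //= ; ring.
Qed.
Lemma PL t : Pz t *m Lz t = 1.
Proof.
apply/matrixP => i j; rewrite mul3 /Lz /Pz /mx3z !mxE.
by case: i => [[|[|[|i]]] Hi] //; case: j => [[|[|[|j]]] Hj] //= ; ring.
Qed.

Unset Implicit Arguments.
Theorem mainTheorem2 (R : realType) (t : nat)
  (v w : 'I_3 -> 'cV[R]_3) (lv lw : 'I_3 -> R) :
  eigenbasis (A_t R t) v lv -> eigenbasis (M_t R t) w lw ->
  cf_equiv (cont_frac v) (cont_frac w).
Proof.
move=> [Hv lvi] [Hw lwi].
pose L := map_mx (fun a : int => a%:~R : R) (Lz t).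
pose L' := map_mx (fun a : int => a%:~R : R) (Pz t).
have fg : cancel (lin L) (lin L').
  by move=> x; rewrite /lin mulmxA -map_mxM PL map_mx1 mul1mx.
have gf : cancel (lin L') (lin L).
  by move=> x; rewrite /lin mulmxA -map_mxM LP map_mx1 mul1mx.
have wr : forall j, qM t (lw j) = 0 /\ w j 2%:R 0 != 0.
  move=> j; have [wnz Mw] := Hw j.
  have [_ [_ e]] := eigM Mw.
  have w2 : w j 2%:R 0 != 0.
    apply/eqP => h; move/eqP: wnz; apply; rewrite (eigM_vec Mw) h scale0r //.
  split => //; move/eqP: e; rewrite mulf_eq0 (negbTE w2) orbF; exact/eqP.
have key : forall i, exists p : 'I_3 * R, p.2 != 0 /\ L *m v i = p.2 *: w p.1.
  move=> i; have [vnz Av] := Hv i.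
  have [_ [_ e3]] := eigA Av.
  have x0 : v i 0 0 != 0.
    apply/eqP => h; move/eqP: vnz; apply; rewrite (eigA_vec Av) h scale0r //.
  have pl : pA t (lv i) = 0.
    by move/eqP: e3; rewrite mulf_eq0 (negbTE x0) /= => /eqP.
  have [l0 l1] := pA_root_ne pl.
  have qm := qmuf pl.
  have n01 : lw 0 != lw 1 by rewrite (inj_eq lwi).
  have n02 : lw 0 != lw 2%:R by rewrite (inj_eq lwi).
  have n12 : lw 1 != lw 2%:R by rewrite (inj_eq lwi).
  have [j Ej] : exists j, muf t (lv i) = lw j.
    case: (cubic (wr 0).1 (wr 1).1 (wr 2%:R).1 qm n01 n02 n12) => E.
    - by exists 0.
    - by exists 1.
    - by exists 2%:R.
  exists (j, v i 0 0 * (lv i * (1 - lv i)) / w j 2%:R 0) => /=; split.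
    by rewrite !mulf_neq0 // invr_eq0 (wr j).2.
  rewrite /L (Lx Av) Ej.
  have [_ Mw] := Hw j.
  have wE := eigM_vec Mw; have y0 := (wr j).2.
  set y := w j 2%:R 0 in wE y0 *.
  by rewrite [in RHS]wE scalerA divfK.
have [f Hf] := choice key.
pose sg i := (f i).1; pose c i := (f i).2.
have c0 : forall i, c i != 0 by move=> i; exact: (Hf i).1.
have Lv : forall i, L *m v i = c i *: w (sg i) by move=> i; exact: (Hf i).2.
have sgi : injective sg.
  move=> i i' E.
  have Vi : v i = (c i / c i') *: v i'.
    have h1 : v i = c i *: (L' *m w (sg i)).
      by rewrite scalemxAr -Lv; symmetry; apply: fg.
    have h2 : v i' = c i' *: (L' *m w (sg i')).
      by rewrite scalemxAr -Lv; symmetry; apply: fg.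
    by rewrite h1 E h2 scalerA divfK.
  have [vnz Av] := Hv i; have [_ Av'] := Hv i'.
  have : (lv i - lv i') *: v i = 0.
    rewrite scalerBl -Av {1}Vi -scalemxAr Av' scalerA mulrC -scalerA -Vi subrr //.
  move/eqP; rewrite scaler_eq0 (negbTE vnz) orbF subr_eq0 => /eqP.
  exact: lvi.
exact: (@transfer R (Lz t) (Pz t) v w c sg sgi fg gf c0 Lv).
Qed.
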